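(* Let $(a_i)_{i\in\mathbb{Z}}$ and $(b_i)_{i\in\mathbb{Z}}$ be jointly stationary processes, with $a_i$ taking values in the positive integers and $b_i$ in a finite or countable alphabet, such that: (i) $(a_i)$ is i.i.d.; (ii) each $a_i$ is independent of the joint collection $\{a_j: j<i\}\cup\{b_j:j<i\}$; (iii) each $b_i$ is almost surely determined by $a_i,b_{i-1},b_{i-2},\dots,b_{i-a_i}$. Then $(b_i)_{i\in\mathbb{Z}}$ is a uniform martingale.
   Context: A stationary process $(X_i)_{i\in\mathbb{Z}}$ on a finite or countable alphabet is a uniform martingale if the conditional distribution of $X_0$ given $X_{-1},\dots,X_{-n}$ converges as $n\to\infty$ to the conditional distribution of $X_0$ given the entire past $X_{-1},X_{-2},\dots$ in total variation, uniformly over all pasts. *)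

(* Defs.v *)
From HB Require Import structures.
From mathcomp Require Import all_boot all_order all_algebra.
From mathcomp Require Import all_classical all_reals all_analysis.
Set Implicit Arguments. Unset Strict Implicit. Unset Printing Implicit Defensive.
Import Order.TTheory GRing.Theory Num.Theory.
Local Open Scope classical_set_scope.
Local Open Scope ring_scope.

Section Processes.
Context {R : realType} {d : measure_display} {T : measurableType d}
  (P : probability T R).

Definition discrete_process {A : Type} (X : int -> T -> A) : Prop :=
  forall (i : int) (x : A), measurable [set w | X i w = x].

Definition pr (E : set T) : R := fine (P E).

(** Joint stationarity of (a_i, b_i): all finite-dimensional distributions
    (on consecutive windows, determined by atoms since alphabets are
    countable) are shift invariant. *)
Definition jointly_stationary {A B : Type} (a : int -> T -> A) (b : int -> T -> B)
  : Prop :=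
  forall (m k : int) (n : nat) (x : nat -> A) (y : nat -> B),
    P [set w | forall j : nat, (j < n)%N ->
               a (m + j%:Z) w = x j /\ b (m + j%:Z) w = y j]
  = P [set w | forall j : nat, (j < n)%N ->
               a (m + k + j%:Z) w = x j /\ b (m + k + j%:Z) w = y j].

Definition iid {A : Type} (a : int -> T -> A) : Prop :=
  (forall (i : int) (x : A), P [set w | a i w = x] = P [set w | a 0 w = x]) /\
  (forall (s : seq int) (x : int -> A), uniq s ->
     pr [set w | forall i, i \in s -> a i w = x i]
     = \prod_(i <- s) pr [set w | a i w = x i]).

(** a_i is independent of the sigma-algebra generated by
    {a_j : j < i} U {b_j : j < i} (product rule against the generating
    pi-system of finite-dimensional atoms of the past). *)
Definition indep_of_past {A B : Type} (a : int -> T -> A) (b : int -> T -> B)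
  : Prop :=
  forall (i : int) (x : A) (s : seq int) (u : int -> A) (v : int -> B),
    all (fun j => j < i) s ->
    pr ([set w | a i w = x] `&`
        [set w | forall j, j \in s -> a j w = u j /\ b j w = v j])
    = pr [set w | a i w = x] *
      pr [set w | forall j, j \in s -> a j w = u j /\ b j w = v j].

Definition determined_by_window {B : Type} (a : int -> T -> nat)
  (b : int -> T -> B) : Prop :=
  forall i : int, exists F : nat -> seq B -> B,
    {ae P, forall w, b i w =
       F (a i w) [seq b (i - (k.+1)%:Z) w | k <- iota 0 (a i w)]}.

Definition past_cyl {B : Type} (b : int -> T -> B) (n : nat) (y : nat -> B)
  : set T :=
  [set w | forall k : nat, (k < n)%N -> b (- (k.+1)%:Z) w = y k].

Definition past_of {B : Type} (b : int -> T -> B) (w : T) : nat -> B :=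
  fun k => b (- (k.+1)%:Z) w.

Definition past_sigma {B : Type} (b : int -> T -> B) : set (set T) :=
  <<s [set C | exists n y, C = past_cyl b n y] >>.

(** Conditional distribution of b_0 given b_{-1},...,b_{-n}, evaluated at
    the past of w (elementary conditional probability; the value on the
    null set of pasts of probability 0 is irrelevant). *)
Definition cond_fin {B : Type} (b : int -> T -> B) (n : nat) (w : T) (y : B)
  : R :=
  pr ([set w' | b 0 w' = y] `&` past_cyl b n (past_of b w))
  / pr (past_cyl b n (past_of b w)).

(** h is (a version of) the regular conditional distribution of b_0 given
    the entire past: h y is measurable w.r.t. the past sigma-algebra,
    h w is a probability distribution on B for each w, and
    P(b_0 = y, C) = E[h y ; C] for every past cylinder C (these generate the
    past sigma-algebra and form a pi-system). *)
Definition cond_dist_given_past {B : choiceType} (b : int -> T -> B)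
  (h : B -> T -> R) : Prop :=
  (forall (y : B) (r : R), past_sigma b [set w | h y w < r]) /\
  (forall y w, 0 <= h y w) /\
  (forall w, (\esum_(y in [set: B]) (h y w)%:E)%E = 1%E) /\
  (forall (y : B) (n : nat) (z : nat -> B),
     P ([set w | b 0 w = y] `&` past_cyl b n z)
     = (\int[P]_(w in past_cyl b n z) (h y w)%:E)%E).

Definition tv {B : choiceType} (p q : B -> R) : \bar R :=
  (2^-1 %:E * \esum_(y in [set: B]) (`|p y - q y|)%:E)%E.

Definition uniform_martingale {B : choiceType} (b : int -> T -> B) : Prop :=
  exists h : B -> T -> R, cond_dist_given_past b h /\
    forall e : R, 0 < e -> exists N : nat,
      {ae P, forall w, forall n : nat, (N <= n)%N ->
         (tv (cond_fin b n w) (fun y => h y w) <= e%:E)%E}.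

End Processes.

(* Main.v *)
Require Import Defs.
From HB Require Import structures.
From mathcomp Require Import all_boot all_order all_algebra.
From mathcomp Require Import all_classical all_reals all_analysis.
From mathcomp Require Import measurable_realfun.
From mathcomp Require Import lra.
Import Order.TTheory GRing.Theory Num.Theory.
Local Open Scope classical_set_scope.
Local Open Scope ring_scope.
Set Implicit Arguments. Unset Strict Implicit. Unset Printing Implicit Defensive.

Section Gen.
Variables (R : realType) (d : measure_display) (T : measurableType d)
  (P : probability T R).

Definition mseq {X : Type} (f : nat -> T -> X) (n : nat) (w : T) : seq X :=
  [seq f k w | k <- iota 0 n].

Lemma mseqE {X : eqType} (x0 : X) (f : nat -> T -> X) n w s :
  (mseq f n w = s) <-> (size s = n /\ forall k, (k < n)%N -> f k w = nth x0 s k).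
Proof.
split.
  move=> <-; rewrite /mseq size_map size_iota; split => // k kn.
  by rewrite (nth_map 0%N) ?size_iota // nth_iota.
move=> [sz H]; apply: (@eq_from_nth _ x0).
  by rewrite /mseq size_map size_iota.
move=> k; rewrite /mseq size_map size_iota => kn.
by rewrite (nth_map 0%N) ?size_iota // nth_iota // H.
Qed.

Lemma mseq_take {X : Type} (f : nat -> T -> X) k m w : (k <= m)%N ->
  mseq f k w = take k (mseq f m w).
Proof.
by move=> km; rewrite /mseq -map_take take_iota (minn_idPl km).
Qed.

Lemma mseq_meas {X : eqType} (x0 : X) (f : nat -> T -> X) :
  (forall k x, measurable [set w | f k w = x]) ->
  forall n s, measurable [set w | mseq f n w = s].
Proof.
move=> fm n s.
have [sz|sz] := eqVneq (size s) n; last first.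
  rewrite (_ : [set _ | _] = set0) //; apply/seteqP; split => // w /=.
  by move/(mseqE x0) => [ss _]; rewrite ss eqxx in sz.
rewrite (_ : [set _ | _] = \bigcap_k (if (k < n)%N then [set w | f k w = nth x0 s k] else setT)).
  by apply: bigcapT_measurable => k; case: ifP.
apply/seteqP; split => w /=.
  by move/(mseqE x0) => [_ H] k _; case: ifP => // /H.
move=> H; apply/(mseqE x0); split; first by [].
by move=> k kn; have := H k I; rewrite kn.
Qed.

Lemma gen_pred (M : set (set T)) (X : countType) (phi : T -> X) :
  M set0 -> (forall F : (set T)^nat, (forall n, M (F n)) -> M (\bigcup_n F n)) ->
  (forall x, M [set w | phi w = x]) -> forall Q : pred X, M [set w | Q (phi w)].
Proof.
move=> M0 MU Mx Q.
rewrite (_ : [set _ | _] = \bigcup_n [set w | pickle (phi w) = n /\ Q (phi w)]).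
  apply: MU => n.
  case E: (pickle_inv n) => [x|].
    rewrite (_ : [set _ | _] = if Q x then [set w | phi w = x] else set0).
      by case: ifP.
    apply/seteqP; split => w /=.
      move=> [pn Qw]; have : pickle_inv n = Some (phi w) by rewrite -pn pickleK_inv.
      by rewrite E => -[->]; rewrite Qw.
    case: ifP => // Qx wx; have {}wx : phi w = x by []; subst x; split => //.
    by have := @pickle_invK X n; rewrite E.
  rewrite (_ : [set _ | _] = set0) //; apply/seteqP; split => // w /= [pn _].
  by move: E; rewrite -pn pickleK_inv.
apply/seteqP; split => w /=.
  by move=> Qw; exists (pickle (phi w)).
by move=> [n _ [_ ->]].
Qed.

Lemma gen_pred_meas (X : countType) (phi : T -> X) :
  (forall x, measurable [set w | phi w = x]) -> forall Q : pred X, measurable [set w | Q (phi w)].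
Proof.
move=> H; apply: gen_pred => //.
by move=> F mF; exact: bigcupT_measurable.
Qed.

Lemma prE (E : set T) : measurable E -> P E = (pr P E)%:E.
Proof.
move=> mE; rewrite /pr fineK //; rewrite ge0_fin_numE //.
by rewrite (le_lt_trans (probability_le1 P mE)) // ltey.
Qed.

Lemma pr_ge0 (E : set T) : 0 <= pr P E.
Proof. by rewrite /pr fine_ge0. Qed.

Lemma part_sum_nat (phi : T -> nat) (S : set T) :
  (forall n, measurable [set w | phi w = n]) -> measurable S ->
  P S = (\sum_(n <oo) P (S `&` [set w | phi w = n]))%E.
Proof.
move=> mphi mS.
rewrite -measure_semi_bigcup.
- congr (P _); apply/seteqP; split => w /=.
    by move=> Sw; exists (phi w).
  by move=> [n _ []].
- by move=> n; exact: measurableI.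
- move=> i j _ _ [w [[_ <-] [_ <-]]] //.
- by apply: bigcupT_measurable => n; exact: measurableI.
Qed.


Lemma pickle_fiber_meas (X : countType) (phi : T -> X) :
  (forall x, measurable [set w | phi w = x]) ->
  forall n, measurable [set w | pickle (phi w) = n].
Proof.
move=> mphi n.
rewrite (_ : [set _ | _] = [set w | (fun x => pickle x == n) (phi w)]).
  exact: (@gen_pred_meas X phi mphi (fun x => pickle x == n)).
by apply/seteqP; split => w /= /eqP.
Qed.

Lemma part_esum (X : countType) (phi : T -> X) (S : set T) (r : R) :
  (forall x, measurable [set w | phi w = x]) -> measurable S -> 0 <= r ->
  (\esum_(x in [set: X]) (r%:E * P (S `&` [set w | phi w = x])) = r%:E * P S)%E.
Proof.
move=> mphi mS r0.
have mp := pickle_fiber_meas mphi.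
rewrite (part_sum_nat mp mS) -nneseriesZl // nneseries_esumT; last first.
  by move=> n; rewrite mule_ge0.
transitivity (\esum_(n in pickle @` [set: X])
  (r%:E * P (S `&` [set w | pickle (phi w) = n]))%E); last first.
  rewrite esum_mkcond; apply: eq_esum => n _; case: ifPn => // nr.
  rewrite (_ : _ `&` _ = set0) ?measure0 ?mule0 //.
  apply/seteqP; split => // w /= [_ pn]; move/negP: nr; apply.
  by rewrite inE; exists (phi w).
rewrite esum_image; last by move=> x y _ _; exact: (pcan_inj (@pickleK_inv X)).
apply: eq_esum => x _; congr (_ * P _)%E; apply/seteqP; split => w /= [Sw H].
  by split => //; rewrite H.
by split => //; exact: (pcan_inj (@pickleK_inv X)).
Qed.


Lemma fiber_some (X : countType) (phi : T -> X) j x : pickle_inv j = Some x ->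
  [set w | pickle (phi w) = j] = [set w | phi w = x].
Proof.
move=> E; apply/seteqP; split => w /=.
  move=> pj; have : pickle_inv j = Some (phi w) by rewrite -pj pickleK_inv.
  by rewrite E => -[->].
by move=> px; move: E; rewrite -px => E; have := @pickle_invK X j; rewrite E.
Qed.

Lemma fiber_none (X : countType) (phi : T -> X) j : @pickle_inv X j = None ->
  [set w | pickle (phi w) = j] = set0.
Proof.
move=> E; apply/seteqP; split => // w /= pj.
by move: E; rewrite -pj pickleK_inv.
Qed.

End Gen.

Lemma esum_series_swap (R : realType) (Y : choiceType) (f : nat -> Y -> \bar R)
  (Pk : pred nat) : (forall k y, (0 <= f k y)%E) ->
  (\esum_(y in [set: Y]) \sum_(k <oo | Pk k) f k y =
   \sum_(k <oo | Pk k) \esum_(y in [set: Y]) f k y)%E.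
Proof.
move=> f0.
rewrite nneseries_esum; last by move=> n _; exact: esum_ge0.
under eq_esum do rewrite nneseries_esum //.
rewrite !esum_esum //.
apply: (reindex_esum _ _ (fun x => (x.2, x.1))); split.
- by move=> [y k] [/= ? ?]; split.
- by move=> [y1 k1] [y2 k2] /= _ _ [-> ->].
- by move=> [k y] [/= ? ?]; exists (y, k).
Qed.

Lemma esum_single (R : realType) (Y : choiceType) (y0 : Y) (g : Y -> \bar R) :
  (forall y, y != y0 -> g y = 0%E) -> (0 <= g y0)%E ->
  (\esum_(y in [set: Y]) g y = g y0)%E.
Proof.
move=> g0 gy0; rewrite -(esum_set1 gy0) [RHS]esum_mkcond.
apply: eq_esum => y _; case: ifPn => // /negP yn; apply: g0; apply/eqP => E.
by apply: yn; rewrite inE.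
Qed.

Section Main.
Variables (R : realType) (d : measure_display) (T : measurableType d)
  (P : probability T R) (B : countType)
  (a : int -> T -> nat) (b : int -> T -> B).
Hypotheses (a_meas : discrete_process a) (b_meas : discrete_process b)
  (a_indep : indep_of_past P a b).

Let x0 : B := b 0 point.

Definition pw n w := mseq (fun k => b (- (k.+1)%:Z)) n w.
Definition pa n w := mseq (fun k => a (- (k.+1)%:Z)) n w.

Lemma pw_meas n s : measurable [set w | pw n w = s].
Proof. by apply: (mseq_meas x0) => k x; exact: b_meas. Qed.

Lemma pa_meas n s : measurable [set w | pa n w = s].
Proof. by apply: (mseq_meas 0%N) => k x; exact: a_meas. Qed.

Lemma pwQ_meas n (Q : pred (seq B)) : measurable [set w | Q (pw n w)].
Proof. by apply: gen_pred_meas => s; exact: pw_meas. Qed.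

Definition p k := pr P [set w | a 0 w = k].

Lemma Pa k : P [set w | a 0 w = k] = (p k)%:E.
Proof. by rewrite prE //; exact: a_meas. Qed.

Lemma p_ge0 k : 0 <= p k.
Proof. exact: pr_ge0. Qed.

Definition sidx m := [seq - (i.+1)%:Z | i <- iota 0 m].

Lemma sidx_neg m : all (fun j => j < 0) (sidx m).
Proof.
apply/allP => j /mapP [i _ ->]; by rewrite oppr_lt0 ltz_nat.
Qed.

Lemma J_eq m (u : seq nat) (s : seq B) : size u = m -> size s = m ->
  [set w | (pa m w, pw m w) = (u, s)] =
  [set w | forall j, j \in sidx m ->
     a j w = (fun z : int => nth 0%N u (absz z).-1) j /\
     b j w = (fun z : int => nth x0 s (absz z).-1) j].
Proof.
move=> su ss; apply/seteqP; split => w /=.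
  case=> pau pws j /mapP [i]; rewrite mem_iota add0n => /andP [_ im] ->.
  rewrite abszN /=; split.
    by move: pau => /(mseqE 0%N) [_ ->].
  by move: pws => /(mseqE x0) [_ ->].
move=> H; congr pair.
  apply/(mseqE 0%N); split => // i im.
  have := H (- (i.+1)%:Z); rewrite abszN /= => -[] //.
  by apply/mapP; exists i => //; rewrite mem_iota.
apply/(mseqE x0); split => // i im.
have := H (- (i.+1)%:Z); rewrite abszN /= => -[] //.
by apply/mapP; exists i => //; rewrite mem_iota.
Qed.

Lemma L_indep m (Q : pred (seq B)) k :
  P ([set w | a 0 w = k] `&` [set w | Q (pw m w)]) =
  ((p k)%:E * P [set w | Q (pw m w)])%E.
Proof.
pose phi := fun w => (pa m w, pw m w).
have mphi : forall x, measurable [set w | phi w = x].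
  move=> [u s]; rewrite (_ : [set _ | _] = [set w | pa m w = u] `&` [set w | pw m w = s]).
    by apply: measurableI; [exact: pa_meas | exact: pw_meas].
  by apply/seteqP; split => w /=; rewrite /phi; [case=> -> -> | case=> -> ->].
have mA : measurable [set w | a 0 w = k] by exact: a_meas.
rewrite (part_sum_nat P (pickle_fiber_meas mphi) (measurableI _ _ mA (pwQ_meas m Q))).
rewrite (part_sum_nat P (pickle_fiber_meas mphi) (pwQ_meas m Q)) -nneseriesZl //.
apply: eq_eseriesr => j _.
case E: (@pickle_inv (seq nat * seq B)%type j) => [[u s]|]; last first.
  by rewrite (fiber_none _ E) !setI0 measure0 mule0.
rewrite (fiber_some _ E) -setIA.
case Qs: (Q s); last first.
  rewrite (_ : [set w | Q (pw m w)] `&` [set w | phi w = (u, s)] = set0).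
    by rewrite setI0 measure0 mule0.
  apply/seteqP; split => // w /= [Qw [_ pws]]; by rewrite pws Qs in Qw.
have -> : [set w | Q (pw m w)] `&` [set w | phi w = (u, s)] = [set w | phi w = (u, s)].
  apply/seteqP; split => w /=; first by case.
  by move=> ph; split => //; case: ph => _ ->.
have [su|su] := eqVneq (size u) m; last first.
  rewrite (_ : [set w | phi w = (u, s)] = set0) ?setI0 ?measure0 ?mule0 //.
  apply/seteqP; split => // w /= [pau _]; move/eqP: su; apply.
  by rewrite -pau /pa /mseq size_map size_iota.
have [ss|ss] := eqVneq (size s) m; last first.
  rewrite (_ : [set w | phi w = (u, s)] = set0) ?setI0 ?measure0 ?mule0 //.
  apply/seteqP; split => // w /= [_ pws]; move/eqP: ss; apply.
  by rewrite -pws /pw /mseq size_map size_iota.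
rewrite /phi (J_eq su ss).
have mJ : measurable [set w | (pa m w, pw m w) = (u, s)].
  by rewrite (_ : [set _ | _] = [set w | phi w = (u,s)]) //; exact: mphi.
rewrite (J_eq su ss) in mJ.
rewrite (prE P (measurableI _ _ mA mJ)) (prE P mJ).
by rewrite a_indep ?sidx_neg // EFinM.
Qed.


Lemma measure_null_eq (X Y N0 : set T) : measurable X -> measurable Y ->
  measurable N0 -> P N0 = 0%E -> X `\` N0 = Y `\` N0 -> P X = P Y.
Proof.
move=> mX mY mN PN e.
have H : forall Z, measurable Z -> P Z = P (Z `\` N0).
  move=> Z mZ; rewrite measureD //; last first.
    by rewrite (le_lt_trans (probability_le1 P mZ)) // ltey.
  have mZN : measurable (Z `&` N0) by exact: measurableI.
  by rewrite (subset_measure0 mZN mN (@subIsetr _ Z N0) PN) sube0.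
by rewrite (H X mX) (H Y mY) e.
Qed.

Variables (F : nat -> seq B -> B).
Hypothesis HF : {ae P, forall w, b 0 w =
       F (a 0 w) [seq b (0 - (k.+1)%:Z) w | k <- iota 0 (a 0 w)]}.

Definition G y k := [set w | F k (pw k w) = y].

Lemma G_meas y k : measurable (G y k).
Proof.
rewrite /G (_ : [set _ | _] = [set w | (fun s => F k s == y) (pw k w)]).
  exact: (pwQ_meas k (fun s => F k s == y)).
by apply/seteqP; split => w /= /eqP.
Qed.

Definition Cn n c := [set w | pw n w = c].

Lemma Cn_meas n c : measurable (Cn n c).
Proof. exact: pw_meas. Qed.

Lemma GC_eq y k n c : G y k `&` Cn n c =
  [set w | (fun t => (F k (take k t) == y) && (take n t == c)) (pw (maxn k n) w)].
Proof.
apply/seteqP; split => w; rewrite /G /Cn /pw /=;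
  rewrite -(mseq_take _ _ (leq_maxl k n)) -(mseq_take _ _ (leq_maxr k n)).
  by case=> -> ->; rewrite !eqxx.
by case/andP => /eqP -> /eqP ->.
Qed.

Definition hE y w := (\sum_(k <oo) (p k * \1_(G y k) w)%:E)%E.

Lemma main_id y n c : P ([set w | b 0 w = y] `&` Cn n c) =
  (\sum_(k <oo) (p k)%:E * P (G y k `&` Cn n c))%E.
Proof.
have mS : measurable ([set w | b 0 w = y] `&` Cn n c).
  by apply: measurableI; [exact: b_meas | exact: Cn_meas].
rewrite (part_sum_nat P (a_meas 0) mS).
apply: eq_eseriesr => k _.
rewrite GC_eq -(L_indep _ (fun t => (F k (take k t) == y) && (take n t == c))) -GC_eq.
case: HF => N0 [mN0 PN0 sub].
apply: (measure_null_eq _ _ mN0 PN0).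
- by apply: measurableI => //; exact: a_meas.
- apply: measurableI; first exact: a_meas.
  by apply: measurableI; [exact: G_meas | exact: Cn_meas].
have Hw : forall w, ~ N0 w -> b 0 w = F (a 0 w) (pw (a 0 w) w).
  move=> w nN.
  have : b 0 w = F (a 0 w) [seq b (0 - (k.+1)%:Z) w | k <- iota 0 (a 0 w)].
    by apply: contrapT => H; apply: nN; apply: sub.
  by move=> ->; congr F; apply: eq_map => i; rewrite sub0r.
apply/seteqP; split => w /=.
  move=> [[[b0y C] ak] nN]; do ! split => //.
  by rewrite /G /= -ak -b0y Hw.
move=> [[ak [Gw C]] nN]; do ! split => //.
by rewrite Hw // ak.
Qed.

Lemma term_meas D y k : measurable_fun D (fun w => (p k * \1_(G y k) w)%:E).
Proof.
apply/(measurable_realfun.measurable_EFinP D (fun w => p k * \1_(G y k) w)).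
apply: (measurable_realfun.measurable_funM (f := cst (p k))).
  exact: measurable_cst.
by apply: measurable_realfun.measurable_indic; exact: G_meas.
Qed.

Lemma term_ge0 y k w : (0 <= (p k * \1_(G y k) w)%:E)%E.
Proof. by rewrite lee_fin mulr_ge0 // ?p_ge0. Qed.

Lemma int_id y n c : (\int[P]_(w in Cn n c) hE y w =
  \sum_(k <oo) (p k)%:E * P (G y k `&` Cn n c))%E.
Proof.
have mC := Cn_meas n c.
rewrite /hE integral_nneseries //; last first.
  by move=> k w _; exact: term_ge0.
  by move=> k; exact: term_meas.
apply: eq_eseriesr => k _.
under eq_integral do rewrite EFinM.
have mG := G_meas y k.
rewrite ge0_integralZl_EFin //.
- by rewrite (integral_indic _ _ mG).
- apply/(measurable_EFinP _ (\1_(G y k))).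
  exact: measurable_indic.
- exact: p_ge0.
Qed.

Lemma sum_p : (\sum_(k <oo) (p k)%:E = 1)%E.
Proof.
rewrite -(probability_setT P) (part_sum_nat P (a_meas 0) measurableT).
by apply: eq_eseriesr => k _; rewrite setTI Pa.
Qed.

Lemma indic_G y k w : \1_(G y k) w = (F k (pw k w) == y)%:R :> R.
Proof.
rewrite /indic; case: eqP => H; first by rewrite mem_set.
by rewrite memNset.
Qed.

Lemma hE_ge0 y w : (0 <= hE y w)%E.
Proof. by apply: nneseries_ge0 => k _ _; exact: term_ge0. Qed.

Lemma hE_le1 y w : (hE y w <= 1)%E.
Proof.
rewrite -sum_p; apply: lee_nneseries => [k _ _|k _]; first exact: term_ge0.
rewrite lee_fin indic_G; case: eqP => _; rewrite ?mulr1 ?mulr0 //; exact: p_ge0.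
Qed.

Lemma hE_fin y w : hE y w \is a fin_num.
Proof.
by rewrite ge0_fin_numE ?hE_ge0 // (le_lt_trans (hE_le1 y w)) // ltey.
Qed.

Definition h y w := fine (hE y w).

Lemma hE_h y w : (h y w)%:E = hE y w.
Proof. by rewrite /h fineK // hE_fin. Qed.

Lemma esum_hE w : (\esum_(y in [set: B]) hE y w = 1)%E.
Proof.
rewrite /hE esum_series_swap; last by move=> k y; exact: term_ge0.
rewrite -sum_p; apply: eq_eseriesr => k _.
rewrite (@esum_single _ _ (F k (pw k w))).
- by rewrite indic_G eqxx mulr1.
- by move=> y yn; rewrite indic_G eq_sym (negPf yn) mulr0.
- exact: term_ge0.
Qed.

Lemma past_cylE n z : past_cyl b n z = Cn n (map z (iota 0 n)).
Proof.
apply/seteqP; split => w /=.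
  move=> H; rewrite /pw /mseq; apply/eq_in_map => k; rewrite mem_iota add0n => /andP [_ kn].
  exact: H.
move=> /(mseqE x0) [_ H] k kn; rewrite H //.
by rewrite (nth_map 0%N) ?size_iota // nth_iota.
Qed.

Lemma exists_inv_lt (x : R) : 0 < x -> exists m : nat, m.+1%:R^-1 < x.
Proof.
move=> xp; have [N _ HN] := near_infty_natSinv_lt (PosNum xp).
by exists N; apply: HN => /=.
Qed.

Lemma PS_cyl N s : past_sigma b [set w | pw N w = s].
Proof.
have [ss|ss] := eqVneq (size s) N; last first.
  rewrite (_ : [set _ | _] = set0); first exact: sigma_algebra0.
  apply/seteqP; split => // w /= pws; move/eqP: ss; apply.
  by rewrite -pws /pw /mseq size_map size_iota.
rewrite (_ : [set _ | _] = past_cyl b N (nth x0 s)).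
  by rewrite /past_sigma; apply: sub_sigma_algebra; exists N, (nth x0 s).
by rewrite past_cylE -ss -/(mkseq _ _) mkseq_nth.
Qed.

Lemma PS_pred N (Q : pred (seq B)) : past_sigma b [set w | Q (pw N w)].
Proof.
apply: gen_pred.
- exact: sigma_algebra0.
- by move=> Fs HFs; exact: sigma_algebra_bigcup.
- exact: PS_cyl.
Qed.

Lemma PS_compl A : past_sigma b A -> past_sigma b (setT `\` A).
Proof. exact: sigma_algebraCD. Qed.

Definition Sn y N w := (\sum_(0 <= k < N) (p k * \1_(G y k) w)%:E)%E.

Lemma Sn_le_hE y N w : (Sn y N w <= hE y w)%E.
Proof. by apply: nneseries_lim_ge => k _ _; exact: term_ge0. Qed.

Lemma hE_le_bound y w M : (forall N, Sn y N w <= M)%E -> (hE y w <= M)%E.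
Proof.
move=> H; apply: lime_le.
  by apply: is_cvg_nneseries => k _ _; exact: term_ge0.
by apply: nearW => N; exact: H.
Qed.

Lemma Sn_pred y N M : [set w | (Sn y N w <= M)%E] =
  [set w | (fun t => (\sum_(0 <= k < N) (p k * (F k (take k t) == y)%:R)%:E <= M)%E)
     (pw N w)].
Proof.
have E w : Sn y N w =
    (\sum_(0 <= k < N) (p k * (F k (take k (pw N w)) == y)%:R)%:E)%E.
  apply: eq_big_nat => k /andP [_ kN].
  by rewrite indic_G /pw -(mseq_take _ _ (ltnW kN)).
by apply/seteqP; split => w /=; rewrite E.
Qed.

Lemma h_PS y r : past_sigma b [set w | h y w < r].
Proof.
rewrite (_ : [set _ | _] = \bigcup_m (setT `\` \bigcup_N
   (setT `\` [set w | (Sn y N w <= (r - m.+1%:R^-1)%:E)%E]))).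
  apply: sigma_algebra_bigcup => m; apply: PS_compl.
  apply: sigma_algebra_bigcup => N; apply: PS_compl.
  rewrite Sn_pred; exact: (PS_pred N (fun t => (\sum_(0 <= k < N) (p k * (F k (take k t) == y)%:R)%:E <= (r - m.+1%:R^-1)%:E)%E)).
apply/seteqP; split => w /=.
  move=> hr; have [m Hm] : exists m : nat, m.+1%:R^-1 < r - h y w by apply: exists_inv_lt; rewrite subr_gt0.
  exists m => //; split => // -[N _ [_ HN]]; apply: HN.
  apply: (le_trans (Sn_le_hE y N w)); rewrite -hE_h lee_fin.
  by rewrite lerBrDr -lerBrDl ltW.
move=> [m _ [_ Hm]].
have : (hE y w <= (r - m.+1%:R^-1)%:E)%E.
  apply: hE_le_bound => N; apply: contrapT => HN; apply: Hm; exists N => //.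
rewrite -hE_h lee_fin => /le_lt_trans; apply.
by rewrite ltrBlDr ltrDl invr_gt0 ltr0n.
Qed.

Lemma GC_small y k n w : (k <= n)%N ->
  G y k `&` Cn n (pw n w) = if F k (pw k w) == y then Cn n (pw n w) else set0.
Proof.
move=> kn; apply/seteqP; split => w' /=.
  move=> [Gw' Cw'].
  have E : pw k w' = pw k w.
    by rewrite /pw (mseq_take _ _ kn) [in RHS](mseq_take _ _ kn); congr take.
  by case: eqP => // H; apply: H; rewrite -E.
case: eqP => // H Cw'; split => //.
have E : pw k w' = pw k w.
  by rewrite /pw (mseq_take _ _ kn) [in RHS](mseq_take _ _ kn); congr take.
by rewrite /G /= E.
Qed.

Lemma P_GC_small y k n w : (k <= n)%N ->
  P (G y k `&` Cn n (pw n w)) = ((\1_(G y k) w)%:E * P (Cn n (pw n w)))%E.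
Proof.
move=> kn; rewrite GC_small // indic_G.
by case: eqP => _; rewrite ?mul1e ?mul0e ?measure0.
Qed.

Lemma tail_cond (f : nat -> \bar R) n :
  (\sum_(n.+1 <= k <oo) f k = \sum_(k <oo | (n < k)%N) f k)%E.
Proof. by rewrite eseries_cond. Qed.

Definition X2 n w y := (\sum_(n.+1 <= k <oo)
   ((p k)%:E * P (G y k `&` Cn n (pw n w))))%E.
Definition H2 n w y := (\sum_(n.+1 <= k <oo) (p k * \1_(G y k) w)%:E)%E.

Lemma X2_ge0 n w y : (0 <= X2 n w y)%E.
Proof. by apply: nneseries_ge0 => k _ _; rewrite mule_ge0 // lee_fin p_ge0. Qed.

Lemma H2_ge0 n w y : (0 <= H2 n w y)%E.
Proof. by apply: nneseries_ge0 => k _ _; exact: term_ge0. Qed.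

Lemma key n w y : (0 < pr P (Cn n (pw n w))) ->
  ((`|cond_fin P b n w y - h y w|)%:E <=
   ((pr P (Cn n (pw n w)))^-1)%:E * X2 n w y + H2 n w y)%E.
Proof.
set C := Cn n (pw n w); set cr := pr P C => cr0.
have mC : measurable C by exact: Cn_meas.
have PC : P C = cr%:E by rewrite prE.
have mS : measurable ([set w | b 0 w = y] `&` C).
  by apply: measurableI; [exact: b_meas | exact: Cn_meas].
pose h1 := \sum_(0 <= k < n.+1) p k * \1_(G y k) w.
have hsplit : hE y w = (h1%:E + H2 n w y)%E.
  rewrite /hE (nneseries_split 0 n.+1); last by move=> k _; exact: term_ge0.
  by rewrite add0n /h1 -sumEFin.
have xsplit : P ([set w | b 0 w = y] `&` C) = ((h1 * cr)%:E + X2 n w y)%E.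
  rewrite main_id (nneseries_split 0 n.+1); last first.
    by move=> k _; rewrite mule_ge0 // lee_fin p_ge0.
  rewrite add0n /h1 mulr_suml -sumEFin; congr (_ + _)%E.
  apply: eq_big_nat => k /andP [_ kn].
  by rewrite P_GC_small // PC muleA -!EFinM.
have finX : X2 n w y \is a fin_num.
  have : P ([set w | b 0 w = y] `&` C) \is a fin_num by rewrite prE.
  by rewrite xsplit fin_numD => /andP [].
have finH : H2 n w y \is a fin_num.
  by have := hE_fin y w; rewrite hsplit fin_numD => /andP [].
have past : past_cyl b n (past_of b w) = C by rewrite past_cylE.
rewrite /cond_fin past.
rewrite -(fineK finX) -(fineK finH).
have x2ge0 : 0 <= fine (X2 n w y) by rewrite fine_ge0 // X2_ge0.
have h2ge0 : 0 <= fine (H2 n w y) by rewrite fine_ge0 // H2_ge0.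
have -> : pr P ([set w | b 0 w = y] `&` C) = h1 * cr + fine (X2 n w y).
  by rewrite /pr xsplit -(fineK finX) -EFinD.
have -> : h y w = h1 + fine (H2 n w y).
  by rewrite /h hsplit -(fineK finH) -EFinD.
rewrite -EFinM -EFinD lee_fin.
set x2 := fine (X2 n w y); set h2 := fine (H2 n w y).
rewrite mulrDl mulrK ?unitfE ?gt_eqF //.
have A0 : 0 <= x2 / cr by rewrite divr_ge0 // ltW.
rewrite [cr^-1 * x2]mulrC.
rewrite -/cr; set A := x2 / cr; have hA : 0 <= A := A0; have hh : 0 <= h2 := h2ge0.
rewrite ler_norml; apply/andP; split; lra.
Qed.

Definition tau n := (\sum_(k <oo | (n < k)%N) (p k)%:E)%E.

Lemma tau_ge0 n : (0 <= tau n)%E.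
Proof. by apply: nneseries_ge0 => k _ _; rewrite lee_fin p_ge0. Qed.

Lemma tau_le1 n : (tau n <= 1)%E.
Proof.
rewrite -sum_p /tau eseries_mkcond; apply: lee_nneseries => k _.
  by move=> _; case: ifP => _ //; rewrite lee_fin p_ge0.
by case: ifP => _ //; rewrite lee_fin p_ge0.
Qed.

Lemma tau_fin n : tau n \is a fin_num.
Proof.
by rewrite ge0_fin_numE ?tau_ge0 // (le_lt_trans (tau_le1 n)) // ltey.
Qed.

Lemma tv_bound n w : 0 < pr P (Cn n (pw n w)) ->
  (tv (cond_fin P b n w) (fun y => h y w) <= tau n)%E.
Proof.
move=> cr0.
have mC : measurable (Cn n (pw n w)) by exact: Cn_meas.
have PC : P (Cn n (pw n w)) = (pr P (Cn n (pw n w)))%:E by rewrite prE.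
set C := Cn n (pw n w) in mC PC cr0 *; set cr := pr P C in PC cr0 *.
have E1 : (\esum_(y in [set: B]) ((cr^-1)%:E * X2 n w y) = tau n)%E.
  transitivity (\esum_(y in [set: B]) \sum_(k <oo | (n < k)%N)
     ((cr^-1)%:E * ((p k)%:E * P (G y k `&` C))))%E.
    apply: eq_esum => y _; rewrite /X2 -nneseriesZl ?tail_cond //.
    by move=> k _; rewrite mule_ge0 // lee_fin p_ge0.
  rewrite esum_series_swap; last first.
    by move=> k y; rewrite !mule_ge0 // lee_fin ?p_ge0 // invr_ge0 ltW.
  apply: eq_eseriesr => k _.
  transitivity (\esum_(y in [set: B])
     ((cr^-1 * p k)%:E * P (C `&` [set w' | F k (pw k w') = y])))%E.
    by apply: eq_esum => y _; rewrite muleA -EFinM setIC.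
  rewrite part_esum //; last 2 first.
  - by move=> y; exact: G_meas.
  - by rewrite mulr_ge0 ?p_ge0 // invr_ge0 ltW.
  by rewrite PC -EFinM mulrAC mulVf ?gt_eqF // mul1r.
have E2 : (\esum_(y in [set: B]) H2 n w y = tau n)%E.
  transitivity (\esum_(y in [set: B]) \sum_(k <oo | (n < k)%N)
     (p k * \1_(G y k) w)%:E)%E.
    by apply: eq_esum => y _; rewrite /H2 tail_cond.
  rewrite esum_series_swap; last by move=> k y; exact: term_ge0.
  apply: eq_eseriesr => k _.
  rewrite (@esum_single _ _ (F k (pw k w))).
  - by rewrite indic_G eqxx mulr1.
  - by move=> y yn; rewrite indic_G eq_sym (negPf yn) mulr0.
  - exact: term_ge0.
rewrite /tv; apply: le_trans.
  apply: lee_wpmul2l; first by rewrite lee_fin invr_ge0.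
  apply: le_esum => y _; exact: key.
rewrite esumD; last 2 first.
- by move=> y _; rewrite mule_ge0 ?X2_ge0 // lee_fin invr_ge0 ltW.
- by move=> y _; exact: H2_ge0.
rewrite E1 E2 -(fineK (tau_fin n)) -EFinD -EFinM lee_fin.
set t := fine (tau n); lra.
Qed.

Lemma tau_small e : 0 < e -> exists N, forall n, (N <= n)%N -> (tau n <= e%:E)%E.
Proof.
move=> e0.
have hc := @nneseries_tail_cvg R (fun k => (p k)%:E) xpredT.
have /hc{}hc : (\sum_(0 <= k <oo | xpredT k) (p k)%:E < +oo)%E.
  by rewrite sum_p ltey.
have /hc{}hc : forall k, xpredT k -> (0 <= (p k)%:E)%E.
  by move=> k _; rewrite lee_fin p_ge0.
have {}hc : (\sum_(N <= k <oo | xpredT k) (p k)%:E)%E @[N --> \oo] --> (0:R)%:E.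
  exact: hc.
move/fine_cvgP: hc => [_ hc].
move/cvgrPdist_lt: hc => /(_ e e0) [M _ HM].
exists M => n Mn.
have := HM n.+1 (leq_trans Mn (leqnSn n)); rewrite /= sub0r normrN.
have tf := tau_fin n; have t0 := tau_ge0 n.
rewrite /tau -tail_cond in tf t0 *.
rewrite -(fineK tf) lee_fin => lt; apply: ltW; apply: le_lt_trans lt.
by rewrite ler_norm.
Qed.

Definition Zn n := [set w | P (Cn n (pw n w)) = 0%E].

Lemma Zn_meas n : measurable (Zn n).
Proof.
rewrite /Zn (_ : [set _ | _] = [set w | (fun s => P (Cn n s) == 0%E) (pw n w)]).
  exact: (pwQ_meas n (fun s => P (Cn n s) == 0%E)).
by apply/seteqP; split => w /= /eqP.
Qed.

Lemma Zn_null n : P (Zn n) = 0%E.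
Proof.
rewrite (part_sum_nat P (pickle_fiber_meas (pw_meas n)) (Zn_meas n)).
rewrite eseries0 // => j _ _.
case E: (@pickle_inv (seq B) j) => [s|]; last by rewrite (fiber_none _ E) setI0.
rewrite (fiber_some _ E).
have [P0|P0] := eqVneq (P (Cn n s)) 0%E.
  have mZ : measurable (Zn n `&` [set w | pw n w = s]).
    by apply: measurableI; [exact: Zn_meas | exact: pw_meas].
  have sub : Zn n `&` [set w | pw n w = s] `<=` Cn n s by move=> w [_ H]; exact: H.
  exact: (subset_measure0 mZ (Cn_meas n s) sub P0).
rewrite (_ : _ `&` _ = set0) ?measure0 //.
apply/seteqP; split => // w /= [Zw pws]; move: Zw; rewrite /Zn /= pws => Z0.
by rewrite Z0 eqxx in P0.
Qed.

End Main.


Theorem mainTheorem9 (R : realType) (d : measure_display) (T : measurableType d)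
  (P : probability T R) (B : countType)
  (a : int -> T -> nat) (b : int -> T -> B)
  (a_meas : discrete_process a) (b_meas : discrete_process b)
  (a_pos : forall (i : int) (w : T), (0 < a i w)%N)
  (stat : jointly_stationary P a b)
  (a_iid : iid P a)
  (a_indep : indep_of_past P a b)
  (b_det : determined_by_window P a b) :
  uniform_martingale P b.
Proof.
have [F HF] := b_det 0.
exists (h P a b F); split.
  split; [ | split; [ | split]].
  - by move=> y r; exact: h_PS.
  - by move=> y w; apply: fine_ge0; exact: hE_ge0.
  - move=> w; under eq_esum do rewrite (hE_h P b a_meas).
    exact: (esum_hE P b a_meas).
  - move=> y n z; rewrite past_cylE (main_id a_meas b_meas a_indep HF) -int_id //.
    by apply: eq_integral => w _; rewrite (hE_h P b a_meas).
move=> e e0; have [N HN] := tau_small P a_meas e0.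
exists N.
have nZ : P.-negligible (\bigcup_n Zn P b n).
  apply: negligible_bigcup => n; exists (Zn P b n); split => //.
  - exact: (Zn_meas P b_meas).
  - exact: (Zn_null P b_meas).
apply: negligibleS nZ.
move=> w /= ngood; apply: contrapT => nZw; apply: ngood => n Nn.
apply: le_trans (HN n Nn).
apply: (tv_bound a_meas b_meas a_indep HF).
have mC : measurable (Cn b n (pw b n w)) by exact: Cn_meas.
have PC : P (Cn b n (pw b n w)) != 0%E by apply/eqP => H; apply: nZw; exists n.
rewrite lt_neqAle pr_ge0 andbT eq_sym; apply: contra PC => /eqP pr0.
by rewrite (prE P mC) pr0.
Qed.
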